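(* Let $R$ be a commutative ring and let $f,g\in R[[x]]$ be formal power series. For an integer $m\ge1$ write $\ell(m)=\lfloor\log_2 m\rfloor$. Then $$f(x)g(x)=\frac{f(x)\odot g(x)}{1-x}-\sum_{m=1}^{\infty}\frac{1-x^{2^{\ell(m)}}}{(1-x)\,x^m}\,U_m(x)\,V_m(x),$$ where $$U_m(x)=\Bigl(\frac{x^m}{1-x^{2^{\ell(m)+1}}}\Bigr)\odot\Bigl(\bigl(1-x^{2^{\ell(m)}}\bigr)f(x)\Bigr),\qquad V_m(x)=\Bigl(\frac{x^m}{1-x^{2^{\ell(m)+1}}}\Bigr)\odot\Bigl(\bigl(1-x^{2^{\ell(m)}}\bigr)g(x)\Bigr).$$
   Context: For formal power series $P=\sum_i p_ix^i$ and $Q=\sum_i q_ix^i$, the termwise product is $P\odot Q=\sum_i p_iq_ix^i$. Fractions such as $\frac{1}{1-x^{N}}=\sum_{i\ge0}x^{iN}$ are understood in $R[[x]]$; the division by $x^m$ is exact since $U_m,V_m$ are divisible by $x^m$, and the infinite sum converges formally (the $m$-th summand has order at least $m$). *)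

(* Defs.v *)
From mathcomp Require Import all_boot all_order all_algebra.
Set Implicit Arguments. Unset Strict Implicit. Unset Printing Implicit Defensive.
Import GRing.Theory.
Local Open Scope ring_scope.

Definition fps (R : Type) := nat -> R.

Section FPS.
Variable R : comPzRingType.

Definition fps_add (P Q : fps R) : fps R := fun n => P n + Q n.
Definition fps_sub (P Q : fps R) : fps R := fun n => P n - Q n.
Definition fps_mul (P Q : fps R) : fps R :=
  fun n => \sum_(i < n.+1) P i * Q (n - i)%N.
Definition fps_had (P Q : fps R) : fps R := fun n => P n * Q n.
Definition fps_one : fps R := fun n => if n == 0%N then 1 else 0.
Definition fps_xpow (N : nat) : fps R := fun n => if n == N then 1 else 0.
(* 1/(1 - x^N) = \sum_{i>=0} x^(iN)  (used for N >= 1) *)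
Definition fps_geom (N : nat) : fps R := fun n => if (N %| n)%N then 1 else 0.
(* exact division by x^m of a series divisible by x^m *)
Definition fps_divX (m : nat) (P : fps R) : fps R := fun n => P (n + m)%N.
Definition fps_sum (a b : nat) (F : nat -> fps R) : fps R :=
  fun n => \sum_(a <= m < b) F m n.
End FPS.

Definition ell (m : nat) : nat := trunc_log 2 m.

Section Formula.
Variable R : comPzRingType.

Definition mask (m : nat) : fps R :=
  fps_mul (fps_xpow R m) (fps_geom R (2 ^ (ell m).+1)).

Definition onemx (m : nat) : fps R := fps_sub (fps_one R) (fps_xpow R (2 ^ ell m)).

Definition Um (f : fps R) (m : nat) : fps R :=
  fps_had (mask m) (fps_mul (onemx m) f).

Definition summand (f g : fps R) (m : nat) : fps R :=
  fps_mul (fps_mul (onemx m) (fps_geom R 1)) (fps_divX m (fps_mul (Um f m) (Um g m))).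

Definition had_over (f g : fps R) : fps R := fps_mul (fps_had f g) (fps_geom R 1).
End Formula.

(* Main.v *)
Require Import Defs.
From mathcomp Require Import all_boot all_order all_algebra.
From mathcomp Require Import zify.
Set Implicit Arguments. Unset Strict Implicit. Unset Printing Implicit Defensive.
Import GRing.Theory.

Lemma dm (d q r x : nat) : (r < d) -> x = (q * d + r) -> x %/ d = q /\ x %% d = r.
Proof.
move=> rd ->; have d0 : (0 < d) by lia.
by rewrite divnMDl // modnMDl divn_small ?modn_small // addn0.
Qed.
Lemma mod_char (P i k : nat) : (i < P) ->
  ((i <= k) && (P %| k - i)) = (i == k %% P).
Proof.
move=> iP; have P0 : (0 < P) by lia.
apply/idP/idP.
- case/andP=> ik /dvdnP [q hq].
  have -> : k = (q * P + i) by lia.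
  by rewrite modnMDl modn_small.
- move/eqP=> ->; rewrite leq_mod /=.
  apply/dvdnP; exists (k %/ P).
  by rewrite {1}(divn_eq k P) addnK.
Qed.


Definition Gsh (R : comPzRingType) (h : nat) (gg : nat -> R) (b : nat) : R :=
  (gg b - (if (h <= b)%N then gg (b - h)%N else 0))%R.
Definition A1 (h n j : nat) : bool := (h <= j %% (h*2)) && ((n - j) %% (h*2) < h).
Definition b1 (h n j : nat) : nat := j %% (h*2) + (h*2) * ((n - j) %/ (h*2)).

Ltac dmr d q r x := let e1 := fresh in let e2 := fresh in
  have [e1 e2] := dm (d:=d) (q:=q) (r:=r) (x:=x) ltac:(lia) ltac:(first [lia|nia]);
  rewrite ?e1 ?e2; clear e1 e2.

Lemma pointwise (R : comPzRingType) (gg : nat -> R) (h c k : nat) : 0 < h ->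
  ((if A1 h (c + k) c then Gsh h gg (b1 h (c + k) c) else 0)
   - (if ((c + h < (c + k).+1)%N && A1 h (c + k) (c + h))
      then Gsh h gg (b1 h (c + k) (c + h)) else 0)
  = gg ((h*2) * ((c + k - c) %/ (h*2)) + c %% (h*2))%N
    - gg (h * ((c + k - c) %/ h) + c %% h)%N)%R.
Proof.
move=> h0; rewrite /A1 /b1 addKn subnDl.
have P0 : 0 < h * 2 by lia.
move: (divn_eq c (h*2)) (ltn_pmod c P0) (divn_eq k (h*2)) (ltn_pmod k P0).
move: (c %/ (h*2)) (c %% (h*2)) (k %/ (h*2)) (k %% (h*2)) => s u Q v Ec uP Ek vP.
rewrite Ec Ek.
dmr (h*2) s u (s * (h * 2) + u).
dmr (h*2) Q v (Q * (h * 2) + v).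
rewrite /Gsh.

case: (ltnP u h) => hu; case: (ltnP v h) => hv.
-
  dmr (h) (s*2) (u) (s * (h * 2) + u).
  dmr (h) (Q*2) (v) (Q * (h * 2) + v).
  case: (ltnP (s * (h * 2) + u + h) (s * (h * 2) + u + (Q * (h * 2) + v)).+1) => hk /=;
    last by rewrite subr0 (_ : h * 2 * Q + u = h * (Q * 2) + u) ?subrr //; lia.
  dmr (h*2) (s) (u + h) (s * (h * 2) + u + h).
  have hQ : 0 < Q by nia.
  have hQ2 : h * 2 <= Q * (h * 2) := leq_pmull _ hQ.
  have [e1 e2] := dm (d := h*2) (q := Q - 1) (r := v + h) (x := Q * (h * 2) + v - h) ltac:(lia) ltac:(rewrite mulnBl mul1n; lia).
  rewrite e2.
  rewrite (_ : h <= u + h = true); last by lia.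
  rewrite (_ : v + h < h = false) ?andbF; last by lia.
  by rewrite subr0 (_ : h * 2 * Q + u = h * (Q * 2) + u) ?subrr //; lia.
-
  dmr (h) (s*2) (u) (s * (h * 2) + u).
  dmr (h) (Q*2+1) (v - h) (Q * (h * 2) + v).
  rewrite (_ : s * (h * 2) + u + h < (s * (h * 2) + u + (Q * (h * 2) + v)).+1 = true); last by lia.
  dmr (h*2) (s) (u + h) (s * (h * 2) + u + h).
  dmr (h*2) (Q) (v - h) (Q * (h * 2) + v - h).
  rewrite (_ : h <= u + h = true); last by lia.
  rewrite (_ : v - h < h = true); last by lia.
  rewrite (_ : h <= u + h + h * 2 * Q = true); last by lia.
  rewrite /= sub0r opprB.
  rewrite (_ : u + h + h * 2 * Q - h = h * 2 * Q + u); last by lia.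

  rewrite (_ : u + h + h * 2 * Q = h * (Q * 2 + 1) + u) //; lia.
-
  dmr (h) (s*2+1) (u - h) (s * (h * 2) + u).
  dmr (h) (Q*2) (v) (Q * (h * 2) + v).
  rewrite /=.
  dmr (h*2) (s + 1) (u - h) (s * (h * 2) + u + h).
  rewrite (_ : h <= u - h = false) ?andbF; last by lia.
  rewrite (_ : h <= u + h * 2 * Q = true); last by lia.
  rewrite subr0 (_ : u + h * 2 * Q = h * 2 * Q + u); last by lia.
  by rewrite (_ : h * 2 * Q + u - h = h * (Q * 2) + (u - h)) //; lia.
-
  dmr (h) (s*2+1) (u - h) (s * (h * 2) + u).
  dmr (h) (Q*2+1) (v - h) (Q * (h * 2) + v).
  rewrite /=.
  dmr (h*2) (s + 1) (u - h) (s * (h * 2) + u + h).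
  rewrite (_ : h <= u - h = false) ?andbF; last by lia.
  by rewrite subr0 (_ : h * 2 * Q + u = h * (Q * 2 + 1) + (u - h)) ?subrr //; lia.
Qed.


Section S.
Variable R : comPzRingType.
Local Open Scope ring_scope.

Lemma sum_delta (N c : nat) (X : nat -> R) :
  \sum_(i < N) (if (i : nat) == c then X i else 0) = if (c < N)%N then X c else 0.
Proof. by rewrite -big_mkcond big_ord1_eq. Qed.

Lemma sum_delta1 (N c : nat) (F : nat -> R) :
  \sum_(i < N) (if (i : nat) == c then 1 else 0) * F i = if (c < N)%N then F c else 0.
Proof.
rewrite -sum_delta; apply: eq_bigr => i _.
by case: eqP => _; rewrite ?mul1r ?mul0r.
Qed.

Lemma sum_trunc (n1 n2 : nat) (F : nat -> R) : (n1 <= n2)%N ->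
  (forall i : nat, (n1 <= i)%N -> (i < n2)%N -> F i = 0) ->
  \sum_(i < n2) F i = \sum_(i < n1) F i.
Proof.
move=> le H; rewrite (big_ord_widen n2 F le) [RHS]big_mkcond.
apply: eq_bigr => i _; case: ltnP => // hi; exact: H.
Qed.

Lemma onemx_geom m i : fps_mul (onemx R m) (fps_geom R 1) i =
  if (i < 2 ^ ell m)%N then 1 else 0.
Proof.
rewrite /fps_mul /onemx /fps_sub /fps_geom.
under eq_bigr do rewrite dvd1n mulr1.
rewrite sumrB /fps_one /fps_xpow !(sum_delta _ _ (fun _ => 1)) /=.
by case: ltnP => _; rewrite ?subr0 ?subrr.
Qed.

Lemma onemx_mul m (f : fps R) j : fps_mul (onemx R m) f j =
  f j - (if (2 ^ ell m <= j)%N then f (j - 2 ^ ell m)%N else 0).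
Proof.
rewrite /fps_mul /onemx /fps_sub.
under eq_bigr do rewrite mulrBl.
rewrite sumrB /fps_one /fps_xpow !(sum_delta1 _ _ (fun i => f (j - i)%N)) /= subn0 ltnS.
done.
Qed.

Lemma mask_eq m j : Defs.mask R m j =
  if (m <= j)%N && (2 ^ (ell m).+1 %| j - m)%N then 1 else 0.
Proof.
rewrite /Defs.mask /fps_mul /fps_xpow (sum_delta1 _ _ (fun i => fps_geom R _ (j - i)%N)) /fps_geom ltnS.
by case: leqP.
Qed.


Lemma ell_bounds m : (0 < m)%N -> (2 ^ ell m <= m < 2 ^ (ell m).+1)%N.
Proof. by move=> m0; rewrite trunc_logP // trunc_log_ltn. Qed.

Lemma summand_eq (f g : fps R) m n : (0 < m)%N ->
  summand f g m n = \sum_(j < n.+1)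
    (if ((j %% 2 ^ (ell m).+1 == m) && ((n - j) %% 2 ^ (ell m).+1 < 2 ^ ell m))%N
     then Gsh (2 ^ ell m) f j *
          Gsh (2 ^ ell m) g (m + 2 ^ (ell m).+1 * ((n - j) %/ 2 ^ (ell m).+1))%N
     else 0).
Proof.
move=> m0; have /andP[hm mP] := ell_bounds m0.
set h := (2 ^ ell m)%N in hm mP *; set P := (2 ^ (ell m).+1)%N in mP *.
have hP : (h < P)%N by lia.
have h0 : (0 < h)%N by rewrite expn_gt0.
rewrite /summand {1}/fps_mul.
under eq_bigr => i _ do rewrite onemx_geom /fps_divX -/h.
have Ea : forall i, (i < n.+1)%N -> fps_mul (Um f m) (Um g m) (n - i + m)%N =
   \sum_(j < n.+1) (if (j + i <= n)%N then Um f m j * Um g m (n - i + m - j)%N else 0).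
  move=> i hi.
  rewrite /fps_mul (sum_trunc (n1 := (n - i).+1) (F := fun j => Um f m j * Um g m (n - i + m - j)%N)); last 2 first.
  - lia.
  - move=> j hj1 hj2; rewrite /Um /fps_had.
    by rewrite !mask_eq (_ : (m <= n - i + m - j)%N = false) ?andFb ?mul0r ?mulr0 //; lia.
  rewrite (sum_trunc (n1 := (n - i).+1) (F := fun j => if (j + i <= n)%N then Um f m j * Um g m (n - i + m - j)%N else 0)); last 2 first.
  - lia.
  - by move=> j hj1 hj2; rewrite (_ : (j + i <= n)%N = false) //; lia.
  by apply: eq_bigr => j _; rewrite (_ : (j + i <= n)%N = true) //; have := ltn_ord j; lia.
transitivity (\sum_(i < n.+1) \sum_(j < n.+1) (if (i < h)%N then 1 else 0) *
   (if (j + i <= n)%N then Um f m j * Um g m (n - i + m - j)%N else 0)).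
  by apply: eq_bigr => i _; rewrite Ea // mulr_sumr.
rewrite exchange_big /=; apply: eq_bigr => j _.
have jn : (j <= n)%N by have := ltn_ord j; lia.
set Uf := Um f m j.
transitivity (\sum_(i < n.+1) Uf * (if (i : nat) == ((n - j) %% P)%N
   then (if ((n - j) %% P < h)%N then Gsh h g (m + P * ((n - j) %/ P))%N else 0) else 0)).
  apply: eq_bigr => i _.
  rewrite /Um /fps_had mask_eq onemx_mul -/h -/P.
  clearbody Uf; clearbody h; clearbody P; clear Ea.
  case: (ltnP i h) => hi; last first.
    rewrite mul0r; case: eqP => [e|]; last by rewrite mulr0.
    by rewrite -e ltnNge hi /= mulr0.
  case: (leqP (j + i) n) => hji; last first.
    rewrite mul1r; case: eqP => [e|]; last by rewrite mulr0.
    by have := leq_mod (n - j) P; rewrite -e; clear e; lia.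
  rewrite mul1r (_ : (m <= n - i + m - j)%N = true) /=; last by lia.
  rewrite (_ : (n - i + m - j - m = n - j - i)%N); last by lia.
  have E : (P %| n - j - i)%N = ((i : nat) == (n - j) %% P)%N.
    rewrite -mod_char; last by lia.
    by rewrite (_ : (i <= n - j)%N = true) //; lia.
  rewrite E; case: eqP => e; last by rewrite !mul0r mulr0.
  rewrite -e hi mul1r /Gsh.
  have Hd := divn_eq (n - j)%N P; rewrite -e in Hd.
  move: ((n - j) %/ P)%N Hd => q Hd.
  by rewrite (_ : (n - i + m - j = m + P * q)%N) //; clear e; lia.
rewrite -mulr_sumr (sum_delta _ _ (fun _ => if ((n - j) %% P < h)%N then Gsh h g (m + P * ((n - j) %/ P))%N else 0)).
rewrite (_ : ((n - j) %% P < n.+1)%N = true); last first.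
  by have := leq_mod (n - j)%N P; move: ((n - j) %% P)%N => r; lia.
rewrite /Uf /Um /fps_had mask_eq onemx_mul -/h -/P mod_char // eq_sym /Gsh.
by case: (_ == m); case: (_ < h)%N; rewrite ?mul1r ?mul0r ?mulr0.
Qed.

End S.


Section S2.
Variable R : comPzRingType.
Local Open Scope ring_scope.

Lemma summand_vanish (f g : fps R) m n : (n < m)%N -> summand f g m n = 0.
Proof.
move=> nm; rewrite summand_eq; last by apply: leq_ltn_trans nm.
apply: big1 => j _; case: eqP => //= e; exfalso.
have := leq_mod j (2 ^ (ell m).+1); rewrite e.
have := ltn_ord j; move: (nat_of_ord j) => j' {e}; lia.
Qed.

Lemma shift_sum (N h : nat) (Y : nat -> R) :
  \sum_(j < N) (if (h <= j)%N then Y j else 0) =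
  \sum_(c < N) (if (c + h < N)%N then Y (c + h)%N else 0).
Proof.
case: (leqP h N) => hN; last first.
  transitivity (0 : R).
    apply: big1 => i _; have hi := ltn_ord i.
    by rewrite (_ : (h <= i)%N = false) //; move: (nat_of_ord i) hi => i' hi; lia.
  symmetry; apply: big1 => i _; have hi := ltn_ord i.
  by rewrite (_ : (i + h < N)%N = false) //; move: (nat_of_ord i) hi => i' hi; lia.
rewrite -(big_mkord xpredT (fun j => if (h <= j)%N then Y j else 0)).
rewrite -(big_mkord xpredT (fun c => if (c + h < N)%N then Y (c + h)%N else 0)).
rewrite (big_cat_nat _ (n := h)) //= big1_seq ?add0r; last first.
  move=> i /andP[_]; rewrite mem_index_iota => /andP[_ hi].
  by rewrite leqNgt hi.
rewrite -{1}[h]add0n big_addn.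
rewrite [RHS](big_cat_nat _ (n := (N - h)%N)) //=; last by rewrite leq_subr.
rewrite [X in _ = _ + X]big1_seq ?addr0; last first.
  move=> i /andP[_]; rewrite mem_index_iota => /andP[hi _].
  by rewrite (_ : (i + h < N)%N = false) //; lia.
apply: eq_big_nat => i /andP[_ hi].
by rewrite leq_addl (_ : (i + h < N)%N = true) //; lia.
Qed.


Definition T (f g : fps R) (L n : nat) : R :=
  \sum_(c < n.+1) f c * g (2 ^ L * ((n - c) %/ 2 ^ L) + c %% 2 ^ L)%N.

Lemma level (f g : fps R) L n :
  \sum_(2 ^ L <= m < 2 ^ L.+1) summand f g m n = T f g L.+1 n - T f g L n.
Proof.
have h0 : (0 < 2 ^ L)%N by rewrite expn_gt0.
rewrite (eq_big_nat _ _ (F2 := fun m => \sum_(j < n.+1)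
   (if ((j %% (2 ^ L * 2) == m) && ((n - j) %% (2 ^ L * 2) < 2 ^ L))%N
    then Gsh (2 ^ L) f j * Gsh (2 ^ L) g (m + 2 ^ L * 2 * ((n - j) %/ (2 ^ L * 2)))%N
    else 0))); last first.
  move=> m hm; rewrite summand_eq; last by case/andP: hm => hm _; exact: leq_trans h0 hm.
  by rewrite (_ : ell m = L) ?expnSr //; apply: trunc_log_eq.
rewrite exchange_big /=.
transitivity (\sum_(j < n.+1) (if A1 (2 ^ L) n j
   then Gsh (2 ^ L) f j * Gsh (2 ^ L) g (b1 (2 ^ L) n j) else 0)).
  apply: eq_bigr => j _.
  transitivity (\sum_(2 ^ L <= m < 2 ^ L.+1 | m == (j %% (2 ^ L * 2))%N)
     (if ((n - j) %% (2 ^ L * 2) < 2 ^ L)%N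
      then Gsh (2 ^ L) f j * Gsh (2 ^ L) g (m + 2 ^ L * 2 * ((n - j) %/ (2 ^ L * 2)))%N
      else 0)).
    rewrite [RHS]big_mkcond; apply: eq_bigr => m _; rewrite eq_sym; by case: eqP.
  rewrite big_nat1_eq /A1 /b1.
  rewrite (_ : (j %% (2 ^ L * 2) < 2 ^ L.+1)%N = true) ?andbT; last first.
    by rewrite expnSr ltn_pmod // muln_gt0 h0.
  by case: (_ <= _)%N.
rewrite /T expnSr.
move: (2 ^ L)%N h0 => h h0.
transitivity (\sum_(j < n.+1) (if A1 h n j then f j * Gsh h g (b1 h n j) else 0)
  - \sum_(j < n.+1) (if (h <= j)%N then (if A1 h n j then f (j - h)%N * Gsh h g (b1 h n j) else 0) else 0)).
  rewrite -sumrB; apply: eq_bigr => j _.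
  case A: (A1 h n j); last by rewrite if_same subr0.
  have hj : (h <= j)%N.
    by move: A; rewrite /A1 => /andP[a _]; exact: leq_trans a (leq_mod _ _).
  by rewrite hj [Gsh h f j]/Gsh hj mulrBl.
rewrite (shift_sum _ _ (fun j => if A1 h n j then f (j - h)%N * Gsh h g (b1 h n j) else 0)) -sumrB.
rewrite -[RHS]sumrB; apply: eq_bigr => c _ /=.
rewrite addnK.
transitivity (f c * ((if A1 h n c then Gsh h g (b1 h n c) else 0) -
   (if (c + h < n.+1)%N && A1 h n (c + h) then Gsh h g (b1 h n (c + h)) else 0))).
  by case: (A1 h n c); case: (c + h < n.+1)%N; case: (A1 h n (c + h)); rewrite /= ?subr0 ?sub0r ?mulr0 ?mulrN // -mulrBr.
rewrite -mulrBr; congr (_ * _).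
have hc : (c <= n)%N by have := ltn_ord c.
by have := pointwise g c (n - c) h0; rewrite subnKC.
Qed.

Lemma levels (f g : fps R) K n :
  \sum_(1 <= m < 2 ^ K) summand f g m n = T f g K n - T f g 0 n.
Proof.
elim: K => [|K IH]; first by rewrite big_geq // subrr.
rewrite (big_cat_nat _ (n := (2 ^ K)%N)) //=; last 2 first.
- by rewrite expn_gt0.
- by rewrite expnS leq_pmull.
rewrite IH level.
by rewrite addrC addrA subrK.
Qed.

Lemma T0 (f g : fps R) n : T f g 0 n = fps_mul f g n.
Proof.
rewrite /T expn0; apply: eq_bigr => c _.
by rewrite divn1 modn1 mul1n addn0.
Qed.

Lemma TK (f g : fps R) K n : (n < 2 ^ K)%N -> T f g K n = had_over f g n.
Proof.
move=> hK; rewrite /T /had_over /fps_mul /fps_had /fps_geom.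
apply: eq_bigr => c _; rewrite dvd1n mulr1.
have hc := ltn_ord c.
rewrite divn_small ?modn_small ?muln0 ?add0n //.
- by move: (2 ^ K)%N hK => P hP; move: (nat_of_ord c) hc => c' hc; lia.
- by move: (2 ^ K)%N hK => P hP; move: (nat_of_ord c) hc => c' hc; lia.
Qed.

End S2.

Unset Implicit Arguments.
Local Open Scope ring_scope.

Theorem mainTheorem3 (R : comPzRingType) (f g : fps R) :
  forall n : nat, exists N0 : nat, forall N : nat, (N0 <= N)%N ->
    fps_mul f g n =
    had_over f g n - fps_sum 1 N (summand f g) n.
Proof.
move=> n; exists n.+1 => N hN.
have hNP := ltn_expl N (isT : (1 < 2)%N).
have E : fps_sum 1 N (summand f g) n = \sum_(1 <= m < 2 ^ N) summand f g m n.
  rewrite /fps_sum [RHS](big_cat_nat _ (n := N)) //=; last 2 first.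
  - by move: hN; clear; lia.
  - exact: ltnW.
  rewrite [X in _ = _ + X]big1_seq ?addr0 // => m /andP[_].
  rewrite mem_index_iota => /andP[hm _]; apply: summand_vanish.
  by move: hN hm; clear; lia.
have hK : (n < 2 ^ N)%N by move: hN hNP; move: (2 ^ N)%N => P; clear; lia.
rewrite E levels T0 (TK f g hK).
by rewrite opprB addrC subrK.
Qed.
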